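(* Let $\mathbf i$ be a reduced expression of $w_0$ whose standard seed satisfies properties (A), (B) and (C). Then for every $i,j\in J_{ex}(\mathbf i)$: if $i>j$ then $(\beta_i;P_j)=0$, and $(\beta_i;P_i)=1$.
   Context: $\mathfrak g$ is a complex simple Lie algebra of simply-laced type, vertex set $I=\{1,\dots,n\}$, Cartan entries $i\cdot j$, Weyl group with simple reflections $s_i$, longest element $w_0$, $N=\ell(w_0)$, fundamental weights $\omega_i$. $\overline D:\mathbb C[\mathsf N]\to\mathbb C(\alpha_1,\dots,\alpha_n)$ is the algebra morphism $\overline D(f)=\sum_{\mathbf j}(f,e_{j_1}\cdots e_{j_r})\big(\alpha_{j_1}(\alpha_{j_1}+\alpha_{j_2})\cdots(\alpha_{j_1}+\dots+\alpha_{j_r})\big)^{-1}$ ($\mathbb C[\mathsf N]$ identified with the graded dual of $U(\mathfrak n)$, $e_i$ Chevalley generators, $\alpha_i$ indeterminates). Positive roots are linear forms in the $\alpha_i$; $(\beta;P)$ = multiplicity of $\beta$ in $P$. For a reduced expression $\mathbf i$: $\beta_j=s_{i_1}\cdots s_{i_{j-1}}(\alpha_{i_j})$; $j_-(\mathbf i)=\max(\{l<j:i_l=i_j\}\cup\{0\})$; $j_+(\mathbf i)=\min(\{l>j:i_l=i_j\}\cup\{N+1\})$; $J_{ex}(\mathbf i)=\{j:j_+(\mathbf i)\le N\}$; flag minors $x_j=D(s_{i_1}\cdots s_{i_j}\omega_{i_j},\omega_{i_j})$ (unipotent minors). Properties: (A) $\overline D(x_j)=1/P_j$ with $P_j$ a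 product of positive roots, for all $j$; (B) $P_jP_{j_-}=\beta_j\prod_{l<j<l_+,\,i_l\cdot i_j=-1}P_l$ for all $j$, with $P_0=1$; (C) $(\beta_i;P_j)-(\beta_i;P_{j_+})\le1$ for all $j\in J_{ex}$, $1\le i\le N$. *)

(* Defs.v *)
From mathcomp Require Import all_boot all_order all_algebra.
Set Implicit Arguments. Unset Strict Implicit. Unset Printing Implicit Defensive.
Import GRing.Theory Num.Theory.
Local Open Scope ring_scope.

(* Rank r = n.+1 (so that 'I_n.+1 has a default element ord0).
   Roots are encoded by their coefficient row vectors in the basis of
   simple roots alpha_1..alpha_r: v represents sum_k v_k alpha_k. *)

Section Defs.
Variable n : nat.
Variable C : 'M[int]_n.+1.   (* Cartan matrix, C i j = i . j *)

Definition simply_laced_simple_cartan : Prop :=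
  [/\ forall i j, C i j = C j i,
      forall i, C i i = 2,
      forall i j, i != j -> C i j = 0 \/ C i j = -1,
      forall i j, connect [rel k l | C k l == -1] i j
    & forall v : 'rV[int]_n.+1, v != 0 -> 0 < (v *m C *m v^T) 0 0].

Definition sroot (i : 'I_n.+1) : 'rV[int]_n.+1 := delta_mx 0 i.

Definition refl (i : 'I_n.+1) (v : 'rV[int]_n.+1) : 'rV[int]_n.+1 :=
  v - (\sum_k v 0 k * C k i) *: sroot i.

Definition wact (w : seq 'I_n.+1) (v : 'rV[int]_n.+1) : 'rV[int]_n.+1 :=
  foldr refl v w.

(* two words represent the same Weyl group element (the Weyl group acts
   faithfully on the root lattice) *)
Definition same_elt (w w' : seq 'I_n.+1) : Prop := forall v, wact w v = wact w' v.

Definition reduced (w : seq 'I_n.+1) : Prop :=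
  forall w', same_elt w' w -> (size w <= size w')%N.

(* reduced expression of the longest element w0: a reduced word of
   maximal length (w0 is the unique element of maximal length) *)
Definition reduced_w0 (w : seq 'I_n.+1) : Prop :=
  reduced w /\ forall w', reduced w' -> (size w' <= size w)%N.

Definition is_root (v : 'rV[int]_n.+1) : Prop :=
  exists (w : seq 'I_n.+1) (i : 'I_n.+1), v = wact w (sroot i).

Definition pos_root (v : 'rV[int]_n.+1) : Prop :=
  is_root v /\ forall k, 0 <= v 0 k.

(* 1-based letters i_l of the word *)
Definition letter (w : seq 'I_n.+1) (l : nat) : 'I_n.+1 := nth ord0 w l.-1.

Definition beta (w : seq 'I_n.+1) (j : nat) : 'rV[int]_n.+1 :=
  wact (take j.-1 w) (sroot (letter w j)).

Definition jminus (w : seq 'I_n.+1) (j : nat) : nat :=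
  last 0%N [seq l <- iota 1 j.-1 | letter w l == letter w j].

Definition jplus (w : seq 'I_n.+1) (j : nat) : nat :=
  head (size w).+1 [seq l <- iota j.+1 (size w - j) | letter w l == letter w j].

Definition Jex (w : seq 'I_n.+1) (j : nat) : bool :=
  (1 <= j <= size w)%N && (jplus w j <= size w)%N.

End Defs.

(* Main.v *)
Require Import Defs.
From mathcomp Require Import all_boot all_order all_algebra.
From mathcomp Require Import ring zify.
Import GRing.Theory Num.Theory.
Local Open Scope ring_scope.

Section Weyl.
Variable n : nat.
Variable C : 'M[int]_n.+1.
Hypothesis Csym : forall i j, C i j = C j i.
Hypothesis Cdiag : forall i, C i i = 2.

Definition dot (x y : 'rV[int]_n.+1) : int := (x *m C *m y^T) 0 0.

Lemma dotBZl x y z c : dot (x - c *: y) z = dot x z - c * dot y z.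
Proof. by rewrite /dot mulmxBl mulmxBl -!scalemxAl !mxE. Qed.

Lemma dotC x y : dot x y = dot y x.
Proof.
have CT : C^T = C by apply/matrixP => i j; rewrite mxE Csym.
have tr : forall M : 'M[int]_1, M 0 0 = M^T 0 0 by move=> M; rewrite mxE.
by rewrite /dot tr !trmx_mul trmxK CT mulmxA.
Qed.

Lemma dot_sroot v i : dot v (sroot i) = \sum_k v 0 k * C k i.
Proof.
by rewrite /dot /sroot trmx_delta -colE !mxE.
Qed.

Lemma reflE i v : refl C i v = v - dot v (sroot i) *: sroot i.
Proof. by rewrite /refl dot_sroot. Qed.

Lemma dot_ss i : dot (sroot i) (sroot i) = 2.
Proof.
rewrite dot_sroot (bigD1 i) //= big1 ?addr0; first by rewrite /sroot mxE !eqxx mul1r Cdiag.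
by move=> k kn; rewrite /sroot mxE eqxx /= (negbTE kn) mul0r.
Qed.

Lemma dotBZr x y z c : dot z (x - c *: y) = dot z x - c * dot z y.
Proof. by rewrite dotC dotBZl !(dotC z). Qed.

Lemma refl_dot i x y : dot (refl C i x) (refl C i y) = dot x y.
Proof.
rewrite !reflE dotBZl !dotBZr dot_ss (dotC (sroot i) y). ring.
Qed.
Lemma reflK i : cancel (refl C i) (refl C i).
Proof.
move=> v.
have d : dot (refl C i v) (sroot i) = - dot v (sroot i) by rewrite reflE dotBZl dot_ss; ring.
rewrite (reflE i (refl C i v)) d scaleNr opprK reflE.
by rewrite subrK.
Qed.

Lemma refl_lin i x y c : refl C i (x - c *: y) = refl C i x - c *: refl C i y.
Proof.
rewrite !reflE dotBZl; apply/matrixP => a b; rewrite !mxE; ring.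
Qed.

Definition sref (b v : 'rV[int]_n.+1) := v - dot v b *: b.

Lemma wact_conj u j v :
  wact C u (refl C j v) = sref (wact C u (sroot j)) (wact C u v).
Proof.
elim: u => [|a u IH] /=; first by rewrite reflE.
rewrite IH /sref refl_lin; congr (_ - _ *: _).
by rewrite refl_dot.
Qed.

Lemma wact_cat a b v : wact C (a ++ b) v = wact C a (wact C b v).
Proof. by rewrite /wact foldr_cat. Qed.

Lemma wact_inj u : injective (wact C u).
Proof.
elim: u => [|a u IH] x y /=; first by [].
by move/(can_inj (reflK a)); apply: IH.
Qed.

Lemma not_reduced A x B y D :
  reduced C (A ++ x :: B ++ y :: D) ->
  wact C A (sroot x) = wact C (A ++ x :: B) (sroot y) -> False.
Proof.
move=> red; rewrite wact_cat => /wact_inj Hx.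
have key : forall v, wact C (x :: B ++ [:: y]) v = wact C B v.
  move=> v; rewrite -cat_cons wact_cat.
  have -> : wact C [:: y] v = refl C y v by [].
  rewrite wact_conj -Hx /sref -reflE /=.
  by rewrite reflK.
have se : same_elt C (A ++ B ++ D) (A ++ x :: B ++ y :: D).
  move=> v; rewrite !wact_cat.
  have -> : x :: B ++ y :: D = (x :: B ++ [:: y]) ++ D by rewrite /= -catA.
  by rewrite wact_cat key.
have := red _ se; rewrite !size_cat /= size_cat /=.
lia.
Qed.
Lemma beta_distinct (w : seq 'I_n.+1) k i :
  reduced C w -> (1 <= k)%N -> (k < i)%N -> (i <= size w)%N ->
  beta C w k != beta C w i.
Proof.
move=> red k1 ki iw; apply/eqP.
set p := k.-1; set q := i.-1.
have pq : (p < q)%N by rewrite /p /q; lia.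
have qs : (q < size w)%N by rewrite /q; lia.
set A := take p w; set x := nth ord0 w p; set w' := drop p.+1 w.
set B := take (q - p.+1) w'; set y := nth ord0 w q; set D := drop q.+1 w.
have e1 : w = A ++ x :: w'.
  by rewrite /A /x /w' -drop_nth ?cat_take_drop //; lia.
have e2 : w' = B ++ y :: D.
  rewrite /B /y /D -drop_nth // -{1}(cat_take_drop (q - p.+1) w'); congr (_ ++ _).
  by rewrite /w' drop_drop; congr drop; lia.
have sA : size A = p by rewrite /A size_takel //; lia.
have sB : size B = (q - p.+1)%N by rewrite /B size_takel // /w' size_drop; lia.
have ew : w = (A ++ x :: B) ++ y :: D by rewrite -catA /= -e2.
have tq : take q w = A ++ x :: B.
  by rewrite ew take_size_cat // size_cat /= sA sB; lia.
rewrite /beta /letter -/p -/q.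
move=> H; apply: (@not_reduced A x B y D).
  by rewrite -cat_cons catA -ew.
by rewrite -tq -H /A /x.
Qed.
End Weyl.

Lemma support n (C : 'M[int]_n.+1) (w : seq 'I_n.+1) (P : nat -> seq 'rV[int]_n.+1) :
  P 0%N = [::] ->
  (forall j, (1 <= j <= size w)%N ->
     perm_eq (P j ++ P (jminus w j))
       (beta C w j :: flatten [seq P l | l <- iota 1 (size w) &
            (l < j < jplus w l)%N && (C (letter w l) (letter w j) == -1)])) ->
  forall j, (j <= size w)%N -> forall b, b \in P j ->
    exists2 k, (1 <= k <= j)%N & b = beta C w k.
Proof.
move=> P0 HB j; elim: j {-2}j (leqnn j) => [|m IH] j jm jw b.
  have -> : j = 0%N by lia.
  by rewrite P0.
case: (ltnP j m.+1) => [jlt|jge]; first by apply: IH => //; lia.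
have -> : j = m.+1 by lia.
move=> bP.
have jr : (1 <= m.+1 <= size w)%N by lia.
have := perm_mem (HB _ jr) b; rewrite mem_cat bP /= in_cons => /esym /orP [/eqP ->|].
  by exists m.+1 => //; lia.
case/flattenP => s /mapP [l]; rewrite mem_filter mem_iota => /andP [/andP [/andP [lj _] _] /andP [l1 lw]] -> bl.
have [k k1 ->] := IH l ltac:(lia) ltac:(lia) b bl.
by exists k => //; lia.
Qed.

Theorem lemma6p5 (n : nat) (C : 'M[int]_n.+1) (w : seq 'I_n.+1)
  (P : nat -> seq 'rV[int]_n.+1) :
  simply_laced_simple_cartan C ->
  reduced_w0 C w ->
  (* (A): each P_j (1 <= j <= N) is a product of positive roots *)
  (forall j, (1 <= j <= size w)%N -> forall b, b \in P j -> pos_root C b) ->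
  P 0%N = [::] ->
  (* (B) *)
  (forall j, (1 <= j <= size w)%N ->
     perm_eq (P j ++ P (jminus w j))
       (beta C w j :: flatten [seq P l | l <- iota 1 (size w) &
            (l < j < jplus w l)%N && (C (letter w l) (letter w j) == -1)])) ->
  (* (C) *)
  (forall j i, Jex w j -> (1 <= i <= size w)%N ->
     (count_mem (beta C w i) (P j) <= (count_mem (beta C w i) (P (jplus w j))).+1)%N) ->
  forall i j, Jex w i -> Jex w j ->
    ((j < i)%N -> count_mem (beta C w i) (P j) = 0%N) /\
    count_mem (beta C w i) (P i) = 1%N.

Proof.
move=> [Csym Cdiag _ _ _] [red _] _ P0 HB _ i j /andP [ir _] /andP [jr _].
have zero : forall j', (j' < i)%N -> (j' <= size w)%N -> count_mem (beta C w i) (P j') = 0%N.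
  move=> j' ji jw; apply/count_memPn/negP => /(@support _ _ _ _ P0 HB _ jw) [k k1 ek].
  have := @beta_distinct _ C Csym Cdiag w k i red ltac:(lia) ltac:(lia) ltac:(lia).
  by rewrite ek eqxx.
split; first by move=> ji; apply: zero => //; lia.
have := permP (HB _ ir) (pred1 (beta C w i)).
have jmi : (jminus w i < i)%N.
  rewrite /jminus; have := mem_last 0%N [seq l <- iota 1 i.-1 | letter w l == letter w i].
  rewrite in_cons => /orP [/eqP ->|]; first lia.
  rewrite mem_filter mem_iota => /andP [_] /andP [_]; case/andP: ir => i0 _; by rewrite add1n prednK.
rewrite count_cat (zero _ jmi) ?addn0; last lia.
move=> ->; rewrite /= eqxx add1n; congr S.
apply/count_memPn/flattenP => [[s /mapP [l]]]; rewrite mem_filter mem_iota => /andP [/andP [/andP [li _] _] /andP [l1 lw]] -> bl.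
have := zero l li lw; move/count_memPn; by rewrite bl.
Qed.
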